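(* Let $T_1,T_2$ be equidistant trees on leaf set $X$ with $|X|=n$, and let $X_0\subseteq X$ be a set of leaves which forms a clade in both $T_1$ and $T_2$, such that the tree topology of this clade is the same in $T_1$ and in $T_2$. Then for any tree $T$ on the tropical line segment from $T_1$ to $T_2$, $X_0$ is also a clade of $T$, with the same tree topology as in $T_1$ and $T_2$.
   Context: Max-plus arithmetic: $a\oplus b=\max\{a,b\}$, $a\odot b=a+b$; vectors in $\mathbb{R}^e$, $e=\binom n2$, with coordinates indexed by pairs of leaves, are considered modulo $\mathbb R\mathbf 1$. An equidistant tree is a rooted phylogenetic tree on leaf set $X$ with nonnegative edge lengths and all root-to-leaf distances equal; its ultrametric $u$ is the vector of pairwise leaf distances, and every ultrametric determines a unique equidistant tree. The tropical line segment between trees with ultrametrics $u,v$ consists of the trees with ultrametrics $a\odot u\oplus b\odot v$, $a,b\in\mathbb R$. A clade of a tree is the set of all leaves descending from some vertex; the clade on $X_0$ is the equidistant tree obtained by restricting the tree to the leaves $X_0$ (its ultrametric is the restriction $(u_{ij})_{i,j\in X_0}$), and its tree topology is the topology of this restricted tree. *)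

(* Defs.v *)
From mathcomp Require Import all_boot all_order all_algebra.
Set Implicit Arguments. Unset Strict Implicit. Unset Printing Implicit Defensive.
Import Order.TTheory GRing.Theory Num.Theory.
Local Open Scope ring_scope.

(* Dissimilarity vectors on a finite leaf set X are functions X -> X -> R;
   only the off-diagonal entries (pairs of distinct leaves) are meaningful. *)

Definition is_ultrametric (R : realFieldType) (X : finType) (u : X -> X -> R) : Prop :=
  [/\ forall i, u i i = 0,
      forall i j, u i j = u j i,
      forall i j, 0 <= u i j
    & forall i j k, u i j <= Num.max (u i k) (u j k)].

Definition trop_comb (R : realFieldType) (X : finType) (a b : R)
  (u v : X -> X -> R) : X -> X -> R :=
  fun i j => Num.max (a + u i j) (b + v i j).

(* w represents the same point of R^e / R1 as y (off-diagonal entries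
   differ by a common constant). *)
Definition eq_mod1 (R : realFieldType) (X : finType) (w y : X -> X -> R) : Prop :=
  exists c : R, forall i j, i != j -> w i j = y i j + c.

Definition ball (R : realFieldType) (X : finType) (u : X -> X -> R)
  (S : {set X}) (i : X) (d : R) : {set X} :=
  [set j in S | (j == i) || (u i j <= d)].

(* Y is a clade of the equidistant tree on leaf set S with ultrametric u
   (restricted to S): the vertex at height d/2 above leaf i has as
   descendants exactly the leaves of S within distance d of i. *)
Definition is_clade (R : realFieldType) (X : finType) (u : X -> X -> R)
  (S Y : {set X}) : Prop :=
  exists i, i \in S /\ exists d : R, Y = ball u S i d.

(* Tree topology of the equidistant tree on S determined by u|S, encoded as
   its cluster system (the set of its clades); a rooted phylogenetic tree
   (with zero-length internal edges contracted) is determined up to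
   isomorphism by its clades. *)
Definition tree_topology (R : realFieldType) (X : finType) (u : X -> X -> R)
  (S : {set X}) : {set X} -> Prop :=
  fun Y => is_clade u S Y.

(* Main.v *)
Require Import Defs.
From mathcomp Require Import all_boot all_order all_algebra.
From Stdlib Require Import FunctionalExtensionality PropExtensionality.
Import Order.TTheory GRing.Theory Num.Theory.
Local Open Scope ring_scope.

Definition strict_cond (R : realFieldType) (X : finType) (u : X -> X -> R)
  (S Y : {set X}) : Prop :=
  [/\ exists i, i \in Y, Y \subset S &
      forall i j k, i \in Y -> j \in Y -> i != j -> k \in S -> k \notin Y ->
        u i j < u i k].
Arguments strict_cond {R X}.

Lemma clade_strict (R : realFieldType) (X : finType) (u : X -> X -> R)
  (S Y : {set X}) : is_ultrametric u -> is_clade u S Y -> strict_cond u S Y.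
Proof.
case=> u0 us up ut [i0 [Si0 [d ->]]]; split.
- by exists i0; rewrite inE Si0 eqxx.
- by apply/subsetP=> x; rewrite inE => /andP[].
move=> i j k; rewrite !inE => /andP[Si Hi] /andP[Sj Hj] nij Sk.
rewrite Sk /= negb_or => /andP[nk /negbTE Hk].
have d0 : 0 <= d.
  have [y [Hy ny]] : exists y, ((y == i0) || (u i0 y <= d)) /\ y != i0.
    case: (eqVneq i i0) => [E|ni]; last by exists i.
    by exists j; split => //; rewrite -E eq_sym.
  move: Hy; rewrite (negbTE ny) /= => H; exact: le_trans (up _ _) H.
have hx : forall x, (x == i0) || (u i0 x <= d) -> u i0 x <= d.
  by move=> x /orP[/eqP ->|//]; rewrite u0.
have Hi' := hx _ Hi; have Hj' := hx _ Hj.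
have dk : d < u i0 k by rewrite ltNge Hk.
have e1 : u i j <= d.
  apply: le_trans (ut i j i0) _; rewrite ge_max (us i i0) (us j i0) Hi' Hj' //.
have e2 : u i0 k <= u i k.
  have := ut i0 k i; rewrite le_max => /orP[H|H].
    by have := lt_le_trans dk H; rewrite ltNge Hi'.
  by rewrite (us i k).
exact: le_lt_trans e1 (lt_le_trans dk e2).
Qed.

Arguments clade_strict {R X u S Y}.

Lemma strict_clade (R : realFieldType) (X : finType) (u : X -> X -> R)
  (S Y : {set X}) : is_ultrametric u -> strict_cond u S Y -> is_clade u S Y.
Proof.
case=> u0 us up ut [[i Hi] /subsetP sub st].
exists i; split; first exact: sub.
case: (pickP [pred j in Y | j != i]) => [j0 /andP[Hj0 nj0]|none].
- case: (arg_maxP (u i) Hi) => m Hm mmax.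
  exists (u i m); apply/setP => x; rewrite inE.
  have dk : forall k, k \in S -> k \notin Y -> u i m < u i k.
    move=> k Sk nk; case: (eqVneq m i) => [->|nm].
    + have nij0 : i != j0 by rewrite eq_sym.
      rewrite u0; exact: le_lt_trans (up i j0) (st _ _ _ Hi Hj0 nij0 Sk nk).
    + by apply: st => //; rewrite eq_sym.
  case Hx: (x \in Y).
  - have Hm' : u i x <= u i m by apply: mmax; exact: Hx.
    by rewrite sub ?Hx // Hm' orbT.
  - case Sx: (x \in S) => //=.
    have nx : x != i by apply/eqP => E; rewrite E Hi in Hx.
    rewrite (negbTE nx) /=; apply/esym/negbTE; rewrite -ltNge; apply: dk => //; by rewrite Hx.
- exists (-1); apply/setP => x; rewrite inE.
  have := none x; rewrite /= => /negbT; rewrite negb_and negbK => H.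
  case Hx: (x \in Y).
  + by move: H; rewrite Hx /= => /eqP ->; rewrite sub // eqxx.
  + case: eqP => [E|_]; first by rewrite E Hi in Hx.
    rewrite /=; apply/esym/negbTE; rewrite negb_and -ltNge; apply/orP; right.
    exact: lt_le_trans (ltrN10 R) (up _ _).
Qed.
Arguments strict_clade {R X u S Y}.

Lemma max_lt2 (R : realFieldType) (x1 x2 y1 y2 : R) :
  x1 < y1 -> x2 < y2 -> Num.max x1 x2 < Num.max y1 y2.
Proof.
move=> h1 h2; rewrite gt_max !lt_max.
by rewrite h1 h2 orbT.
Qed.

Lemma max_le2 (R : realFieldType) (x1 x2 y1 y2 : R) :
  x1 <= y1 -> x2 <= y2 -> Num.max x1 x2 <= Num.max y1 y2.
Proof.
move=> h1 h2; rewrite ge_max !le_max.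
by rewrite h1 h2 orbT.
Qed.

Lemma mono_dist (R : realFieldType) (X : finType) (u1 u2 : X -> X -> R)
  (X0 : {set X}) : is_ultrametric u1 -> is_ultrametric u2 ->
  (forall Y, is_clade u2 X0 Y -> is_clade u1 X0 Y) ->
  forall i j k, i \in X0 -> j \in X0 -> k \in X0 -> i != j -> i != k ->
  u1 i k <= u1 i j -> u2 i k <= u2 i j.
Proof.
move=> U1 U2 H i j k Hi Hj Hk nij nik le1.
rewrite leNgt; apply/negP => lt2.
have C : is_clade u2 X0 (ball u2 X0 i (u2 i j)) by exists i; split => //; exists (u2 i j).
have [_ _ st] := clade_strict U1 (H _ C).
have := st i j k; rewrite !inE Hi Hj Hk eqxx lexx /= orbT.
rewrite (eq_sym k i) (negbTE nik) /= -ltNge lt2 => /(_ isT isT nij isT isT).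
by rewrite ltNge le1.
Qed.
Arguments mono_dist {R X u1 u2 X0}.

Theorem theorem5 (R : realFieldType) (X : finType) (u1 u2 : X -> X -> R)
  (X0 : {set X}) :
  is_ultrametric u1 -> is_ultrametric u2 ->
  is_clade u1 [set: X] X0 -> is_clade u2 [set: X] X0 ->
  tree_topology u1 X0 = tree_topology u2 X0 ->
  forall (a b : R) (w : X -> X -> R),
    is_ultrametric w -> eq_mod1 w (trop_comb a b u1 u2) ->
    is_clade w [set: X] X0 /\
    tree_topology w X0 = tree_topology u1 X0 /\
    tree_topology w X0 = tree_topology u2 X0.
Proof.
move=> U1 U2 C1 C2 Htop a b w W [c Hc].
have T21 : forall Y, is_clade u2 X0 Y -> is_clade u1 X0 Y.
  move=> Y; have E : tree_topology u1 X0 Y = tree_topology u2 X0 Y by rewrite Htop.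
  by rewrite /tree_topology in E; rewrite E.
have T12 : forall Y, is_clade u1 X0 Y -> is_clade u2 X0 Y.
  move=> Y; have E : tree_topology u1 X0 Y = tree_topology u2 X0 Y by rewrite Htop.
  by rewrite /tree_topology in E; rewrite E.
have m12 := mono_dist U1 U2 T21.
have m21 := mono_dist U2 U1 T12.
have wlt : forall i j k, i != j -> i != k -> u1 i j < u1 i k -> u2 i j < u2 i k ->
    w i j < w i k.
  move=> i j k nij nik h1 h2; rewrite (Hc _ _ nij) (Hc _ _ nik) /trop_comb ltrD2r.
  by apply: max_lt2; rewrite ltrD2l.
have wle : forall i j k, i != j -> i != k -> u1 i k <= u1 i j -> u2 i k <= u2 i j ->
    w i k <= w i j.
  move=> i j k nij nik h1 h2; rewrite (Hc _ _ nij) (Hc _ _ nik) /trop_comb lerD2r.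
  by apply: max_le2; rewrite lerD2l.
have TW : tree_topology w X0 = tree_topology u1 X0.
  apply: functional_extensionality => Y; apply: propositional_extensionality.
  rewrite /tree_topology; split => HY.
  - have [ne sub st] := clade_strict W HY.
    apply: strict_clade => //; split => // i j k Hi Hj nij Hk nk.
    have nik : i != k by apply/eqP => E; rewrite -E Hi in nk.
    have Hi0 := subsetP sub _ Hi; have Hj0 := subsetP sub _ Hj.
    rewrite ltNge; apply/negP => le1.
    have le2 := m12 _ _ _ Hi0 Hj0 Hk nij nik le1.
    have := st _ _ _ Hi Hj nij Hk nk.
    by rewrite ltNge (wle _ _ _ nij nik le1 le2).
  - have [ne sub st] := clade_strict U1 HY.
    apply: strict_clade => //; split => // i j k Hi Hj nij Hk nk.
    have nik : i != k by apply/eqP => E; rewrite -E Hi in nk.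
    have Hi0 := subsetP sub _ Hi; have Hj0 := subsetP sub _ Hj.
    have h1 := st _ _ _ Hi Hj nij Hk nk.
    apply: wlt => //; rewrite ltNge; apply/negP => le2.
    have := m21 _ _ _ Hi0 Hj0 Hk nij nik le2.
    by rewrite leNgt h1.
split; last by split => //; rewrite TW.
have [ne _ st1] := clade_strict U1 C1.
have [_ _ st2] := clade_strict U2 C2.
apply: strict_clade => //; split; [exact: ne | exact: subsetT | ].
move=> i j k Hi Hj nij Hk nk.
have nik : i != k by apply/eqP => E; rewrite -E Hi in nk.
by apply: wlt => //; [apply: st1 | apply: st2].
Qed.
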